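(* Let $\kappa$ be a regular uncountable cardinal with $\kappa^{<\kappa}=\kappa$ and $\gamma^\omega<\kappa$ for all $\gamma<\kappa$, and let $I^i$, $I^i_\alpha$ be as in the context. For every $i<\kappa$, every limit ordinal $\delta<\kappa$ and every $\nu\in I^i$ with $\nu\notin I^i_\delta$, there is $\beta<\delta$ such that for every $\sigma\in I^i_\delta$ with $\sigma>\nu$ there is $\sigma'\in I^0_\beta$ with $\sigma>\sigma'>\nu$.
   Context: $I^0$: order $\kappa\times\mathbb Q$ lexicographically; $I^0$ is the set of $f:\omega\to\kappa\times\mathbb Q$, $f(n)=(f_1(n),f_2(n))$, with $\{n\mid f_1(n)\ne0\}$ finite, ordered by comparing at the least $n$ where they differ. Construct linear orders $I^0\subseteq I^1\subseteq\dots$ ($i<\kappa$): given $I^i$, for each $\nu\in I^i$ add a new element $\nu^{i+1}$ with $\nu^{i+1}<\nu$ and, for every $\tau\in I^i\setminus\{\nu\}$, $\tau<\nu^{i+1}$ iff $\tau<\nu$ (for distinct $\nu,\mu$, $\nu^{i+1}<\mu^{i+1}$ iff $\nu<\mu$); $I^{i+1}=I^i\cup\{\nu^{i+1}\mid\nu\in I^i\}$; at limits take unions. Representations: $I^0_\alpha=\{\nu\in I^0\mid\nu_1(n)<\alpha\ \forall n\}$; $I^{i+1}_\alpha=I^i_\alpha\cup\{\nu^{i+1}\mid\nu\in I^i_\alpha\}$; for limit $i$, $I^i_\alpha=\bigcup_{j<i}I^j_\alpha$. *)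

(* Defs.v *)
From mathcomp Require Import all_boot all_order all_algebra.
Import Order.TTheory GRing.Theory Num.Theory.
Set Implicit Arguments.
Unset Strict Implicit.
Unset Printing Implicit Defensive.

(* ---------- the cardinal kappa, modelled as the well-ordered set of the
   ordinals below it: a type K with a strict well-order lt ---------- *)

Definition strict_wellorder (K : Type) (lt : K -> K -> Prop) : Prop :=
  (forall x, ~ lt x x) /\
  (forall x y z, lt x y -> lt y z -> lt x z) /\
  (forall x y, lt x y \/ x = y \/ lt y x) /\
  well_founded lt.

Definition seg (K : Type) (lt : K -> K -> Prop) (a : K) : Type := {x : K | lt x a}.

Definition card_le (A B : Type) : Prop := exists f : A -> B, injective f.
Definition card_lt (A B : Type) : Prop := card_le A B /\ ~ card_le B A.

Definition initial_ordinal (K : Type) (lt : K -> K -> Prop) : Prop :=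
  forall a : K, ~ card_le K (seg lt a).

Definition uncountable (K : Type) : Prop := ~ card_le K nat.

Definition regular (K : Type) (lt : K -> K -> Prop) : Prop :=
  forall A : K -> Prop, ~ card_le K {x : K | A x} ->
    exists b : K, forall x, A x -> lt x b.

Definition kappa_lt_kappa_eq (K : Type) (lt : K -> K -> Prop) : Prop :=
  forall a : K, card_le (seg lt a -> K) K.

Definition omega_powers_small (K : Type) (lt : K -> K -> Prop) : Prop :=
  forall a : K, card_lt (nat -> seg lt a) K.

Definition kappa_hyp (K : Type) (lt : K -> K -> Prop) : Prop :=
  strict_wellorder lt /\ initial_ordinal lt /\ uncountable K /\ regular lt /\
  kappa_lt_kappa_eq lt /\ omega_powers_small lt.

Definition is_zero (K : Type) (lt : K -> K -> Prop) (z : K) : Prop :=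
  forall x, ~ lt x z.
Definition is_succ (K : Type) (lt : K -> K -> Prop) (i j : K) : Prop :=
  lt i j /\ forall x, ~ (lt i x /\ lt x j).
Definition is_limit (K : Type) (lt : K -> K -> Prop) (d : K) : Prop :=
  (exists x, lt x d) /\ forall x, lt x d -> exists y, lt x y /\ lt y d.

Definition finsupp (K : Type) (lt : K -> K -> Prop) (f : nat -> K * rat) : Prop :=
  exists s : seq nat, forall n, ~ is_zero lt (f n).1 -> n \in s.

Definition lexKQ (K : Type) (lt : K -> K -> Prop) (p q : K * rat) : Prop :=
  lt p.1 q.1 \/ (p.1 = q.1 /\ (p.2 < q.2)%R).

Definition ltI0 (K : Type) (lt : K -> K -> Prop) (f g : nat -> K * rat) : Prop :=
  exists n, (forall m, (m < n)%N -> f m = g m) /\ lexKQ lt (f n) (g n).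

(* I^0_beta, as a subset of the ambient carrier U via the embedding e *)
Definition I0a (K U : Type) (lt : K -> K -> Prop) (e : (nat -> K * rat) -> U)
  (beta : K) (x : U) : Prop :=
  exists f, [/\ finsupp lt f, (forall n, lt (f n).1 beta) & x = e f].

(* ---------- the construction I^0 ⊆ I^1 ⊆ ... (i < kappa) ----------
   All I^i live in a common carrier U with a linear order ltU; e embeds I^0,
   up i nu is the new element nu^{i+1}; I i = I^i, Ia i alpha = I^i_alpha. *)
Record is_construction (K : Type) (lt : K -> K -> Prop) (U : Type)
  (ltU : U -> U -> Prop) (e : (nat -> K * rat) -> U) (up : K -> U -> U)
  (I : K -> U -> Prop) (Ia : K -> K -> U -> Prop) : Prop := {
  ltU_irr : forall x, ~ ltU x x;
  ltU_trans : forall x y z, ltU x y -> ltU y z -> ltU x z;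
  ltU_total : forall x y, ltU x y \/ x = y \/ ltU y x;
  e_inj : forall f g, finsupp lt f -> finsupp lt g -> e f = e g -> f = g;
  e_ord : forall f g, finsupp lt f -> finsupp lt g ->
            (ltU (e f) (e g) <-> ltI0 lt f g);
  I_zero : forall z, is_zero lt z ->
            forall x, I z x <-> exists f, finsupp lt f /\ x = e f;
  I_succ : forall i j, is_succ lt i j ->
            forall x, I j x <-> (I i x \/ exists nu, I i nu /\ x = up i nu);
  up_new : forall i nu, I i nu -> ~ I i (up i nu);
  up_inj : forall i nu mu, I i nu -> I i mu -> up i nu = up i mu -> nu = mu;
  up_below : forall i nu, I i nu -> ltU (up i nu) nu;
  up_place : forall i nu tau, I i nu -> I i tau -> tau <> nu ->
            (ltU tau (up i nu) <-> ltU tau nu);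
  up_mono : forall i nu mu, I i nu -> I i mu -> nu <> mu ->
            (ltU (up i nu) (up i mu) <-> ltU nu mu);
  I_limit : forall j, is_limit lt j ->
            forall x, I j x <-> exists k, lt k j /\ I k x;
  Ia_zero : forall z, is_zero lt z -> forall alpha x, Ia z alpha x <-> I0a lt e alpha x;
  Ia_succ : forall i j, is_succ lt i j -> forall alpha x,
            Ia j alpha x <-> (Ia i alpha x \/ exists nu, Ia i alpha nu /\ x = up i nu);
  Ia_limit : forall j, is_limit lt j -> forall alpha x,
            Ia j alpha x <-> exists k, lt k j /\ Ia k alpha x
}.

(* Main.v *)
Require Import Defs.
From mathcomp Require Import all_boot all_order all_algebra.
From mathcomp Require Import zify.
From Stdlib Require Import Classical.
Import Order.TTheory GRing.Theory Num.Theory.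
Set Implicit Arguments.
Unset Strict Implicit.

Definition rootp (K U : Type) (lt : K -> K -> Prop) (ltU : U -> U -> Prop)
  (e : (nat -> K * rat) -> U) (x : U) (eta : nat -> K * rat) : Prop :=
  finsupp lt eta /\ (x = e eta \/ ltU x (e eta)) /\
  (forall g, finsupp lt g -> g <> eta -> (ltU (e g) x <-> ltU (e g) (e eta))).

Lemma root_uniq K lt U ltU e up I Ia (hC : @is_construction K lt U ltU e up I Ia) x eta eta' :
  rootp lt ltU e x eta -> rootp lt ltU e x eta' -> eta = eta'.
Proof.
  intros [f1 [a1 b1]] [f2 [a2 b2]].
  destruct (classic (eta = eta')) as [h|h]; [exact h|exfalso].
  assert (hne : e eta <> e eta') by (intro q; apply h; exact (e_inj hC f1 f2 q)).
  destruct (ltU_total hC (e eta) (e eta')) as [l|[q|l]].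
  - assert (l2 : ltU (e eta) x) by (apply (b2 eta f1 h); exact l).
    destruct a1 as [q|l1].
    + rewrite q in l2. exact (ltU_irr hC l2).
    + exact (ltU_irr hC (ltU_trans hC l2 l1)).
  - exact (hne q).
  - assert (h' : eta' <> eta) by congruence.
    assert (l2 : ltU (e eta') x) by (apply (b1 eta' f2 h'); exact l).
    destruct a2 as [q|l1].
    + rewrite q in l2. exact (ltU_irr hC l2).
    + exact (ltU_irr hC (ltU_trans hC l2 l1)).
Qed.

Lemma classify K (lt : K -> K -> Prop) i :
  is_zero lt i \/ (exists p, is_succ lt p i) \/ is_limit lt i.
Proof.
  destruct (classic (exists x, lt x i)) as [[x0 hx0]|h].
  - destruct (classic (forall x, lt x i -> exists y, lt x y /\ lt y i)) as [hl|hl].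
    + right; right. split; [exists x0; exact hx0|exact hl].
    + right; left. apply not_all_ex_not in hl. destruct hl as [p hp].
      exists p. split.
      * apply NNPP; intro q; apply hp; intro r; contradiction.
      * intros y [h1 h2]. apply hp. intros _. exists y. split; assumption.
  - left. intros x hx. apply h. exists x; exact hx.
Qed.

Definition Inv K lt U ltU e (I : K -> U -> Prop) (Ia : K -> K -> U -> Prop) i :=
  (forall g, finsupp lt g -> I i (e g)) /\ (forall a x, Ia i a x -> I i x) /\
  (forall x, I i x -> exists eta, rootp lt ltU e x eta /\
     forall a, Ia i a x <-> I0a lt e a (e eta)).

Lemma inv_all K lt U ltU e up I Ia (hw : well_founded lt)
  (hC : @is_construction K lt U ltU e up I Ia) : forall i, Inv lt ltU e I Ia i.
Proof.
  intro i. induction i as [i IH] using (well_founded_ind hw).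
  destruct (classify lt i) as [hz|[[p hp]|hl]].
  - split; [|split].
    + intros g hg. apply (proj2 (I_zero hC hz _)). exists g; split; [exact hg|reflexivity].
    + intros a x h. apply (Ia_zero hC hz) in h. destruct h as [f [hf _ hx]].
      apply (I_zero hC hz). exists f; split; assumption.
    + intros x h. apply (I_zero hC hz) in h. destruct h as [f [hf hx]]. subst x.
      exists f. split.
      * split; [exact hf|split; [left; reflexivity|]]. intros; reflexivity.
      * intro a. apply (Ia_zero hC hz).
  - assert (hpi : lt p i) by apply hp.
    destruct (IH p hpi) as [A [B C]].
    split; [|split].
    + intros g hg. apply (I_succ hC hp). left. apply A; exact hg.
    + intros a x h. apply (Ia_succ hC hp) in h. apply (I_succ hC hp).
      destruct h as [h|[nu [h1 h2]]]; [left; exact (B _ _ h)|right; exists nu; split; [exact (B _ _ h1)|exact h2]].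
    + intros x h. apply (I_succ hC hp) in h. destruct h as [h|[nu [h1 h2]]].
      * destruct (C x h) as [eta [r hr]]. exists eta. split; [exact r|].
        intro a. rewrite <- hr. split.
        -- intro q. apply (Ia_succ hC hp) in q. destruct q as [q|[nu [q1 q2]]]; [exact q|].
           exfalso. apply (up_new hC (B _ _ q1)). rewrite <- q2. exact h.
        -- intro q. apply (Ia_succ hC hp). left; exact q.
      * subst x. destruct (C nu h1) as [eta [[f [ra rb]] hr]]. exists eta. split.
        -- split; [exact f|split].
           ++ right. destruct ra as [q|q].
              ** rewrite <- q. exact (up_below hC h1).
              ** exact (ltU_trans hC (up_below hC h1) q).
           ++ intros g hg hne. rewrite <- (rb g hg hne).
              apply (up_place hC h1 (A g hg)).
              intro q.
              assert (h3 := rb g hg hne). rewrite q in h3.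
              destruct ra as [q'|q'].
              ** apply hne. rewrite q' in q. exact (e_inj hC hg f q).
              ** exact (ltU_irr hC (proj2 h3 q')).
        -- intro a. rewrite <- hr. split.
           ++ intro q. apply (Ia_succ hC hp) in q. destruct q as [q|[nu' [q1 q2]]].
              ** exfalso. exact (up_new hC h1 (B _ _ q)).
              ** assert (nu = nu') by exact (up_inj hC h1 (B _ _ q1) q2). subst nu'. exact q1.
           ++ intro q. apply (Ia_succ hC hp). right. exists nu. split; [exact q|reflexivity].
  - split; [|split].
    + intros g hg. apply (I_limit hC hl). destruct (proj1 hl) as [k hk]. exists k.
      split; [exact hk|]. apply (proj1 (IH k hk)); exact hg.
    + intros a x h. apply (Ia_limit hC hl) in h. destruct h as [k [hk h]].
      apply (I_limit hC hl). exists k. split; [exact hk|].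
      exact (proj1 (proj2 (IH k hk)) _ _ h).
    + intros x h. apply (I_limit hC hl) in h. destruct h as [k [hk h]].
      destruct (proj2 (proj2 (IH k hk)) x h) as [eta [r hr]]. exists eta. split; [exact r|].
      intro a. split.
      * intro q. apply (Ia_limit hC hl) in q. destruct q as [k' [hk' q]].
        destruct (proj2 (proj2 (IH k' hk')) x (proj1 (proj2 (IH k' hk')) _ _ q)) as [eta' [r' hr']].
        rewrite (root_uniq hC r r'). apply hr'. exact q.
      * intro q. apply (Ia_limit hC hl). exists k. split; [exact hk|]. apply hr. exact q.
Qed.

Lemma zero_exists K (lt : K -> K -> Prop) (hw : well_founded lt) (x : K) :
  exists z, is_zero lt z.
Proof.
  induction x as [x IH] using (well_founded_ind hw).
  destruct (classic (exists y, lt y x)) as [[y hy]|h].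
  - exact (IH y hy).
  - exists x. intros y hy. apply h. exists y; exact hy.
Qed.

Lemma min_nat (P : nat -> Prop) :
  (exists n, P n) -> exists n, P n /\ forall m, (m < n)%N -> ~ P m.
Proof.
  intros [n hn]. apply NNPP. intro H.
  assert (H0 : forall k m, (m <= k)%N -> ~ P m).
  { induction k as [|k IHk]; intros m hm hP.
    - apply H. exists m. split; [exact hP|]. intros m' hm' _. lia.
    - apply H. exists m. split; [exact hP|]. intros m' hm'. apply IHk. lia. }
  exact (H0 n n (leqnn n) hn).
Qed.

Lemma bound K (lt : K -> K -> Prop)
  (htr : forall x y z, lt x y -> lt y z -> lt x z)
  (htot : forall x y, lt x y \/ x = y \/ lt y x)
  (delta z : K) (hd : is_limit lt delta) (hz : is_zero lt z) (a : nat -> K) :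
  forall n, (forall k, (k < n)%N -> lt (a k) delta) ->
  exists b, lt b delta /\ lt z b /\ forall k, (k < n)%N -> lt (a k) b.
Proof.
  intro n; induction n as [|n IHn]; intro H.
  - destruct hd as [[x0 hx0] hl]. destruct (hl x0 hx0) as [y [h1 h2]].
    exists y. split; [exact h2|split; [|intros k hk; lia]].
    destruct (htot z x0) as [q|[q|q]].
    + exact (htr _ _ _ q h1).
    + subst; exact h1.
    + exfalso; exact (hz _ q).
  - destruct IHn as [b [hb1 [hb2 hb3]]].
    { intros k hk. apply H. lia. }
    assert (han : lt (a n) delta) by (apply H; lia).
    assert (exists c, lt c delta /\ (c = b \/ lt b c) /\ (c = a n \/ lt (a n) c)) as [c [hc1 [hc2 hc3]]].
    { destruct (htot b (a n)) as [q|[q|q]].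
      - exists (a n). split; [exact han|split; [right; exact q|left; reflexivity]].
      - exists b. split; [exact hb1|split; [left; reflexivity|left; exact q]].
      - exists b. split; [exact hb1|split; [left; reflexivity|right; exact q]]. }
    destruct (proj2 hd c hc1) as [y [hy1 hy2]].
    assert (hby : lt b y) by (destruct hc2 as [q|q]; [subst; exact hy1|exact (htr _ _ _ q hy1)]).
    assert (hay : lt (a n) y) by (destruct hc3 as [q|q]; [rewrite <- q; exact hy1|exact (htr _ _ _ q hy1)]).
    exists y. split; [exact hy2|split; [exact (htr _ _ _ hb2 hby)|]].
    intros k hk. destruct (ltnP k n) as [h|h].
    + exact (htr _ _ _ (hb3 k h) hby).
    + assert (k = n) by lia. subst k. exact hay.
Qed.

Theorem mainTheorem11 (K : Type) (lt : K -> K -> Prop) (U : Type)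
  (ltU : U -> U -> Prop) (e : (nat -> K * rat) -> U) (up : K -> U -> U)
  (I : K -> U -> Prop) (Ia : K -> K -> U -> Prop)
  (hK : kappa_hyp lt) (hC : is_construction lt ltU e up I Ia) :
  forall (i delta : K), is_limit lt delta ->
  forall nu : U, I i nu -> ~ Ia i delta nu ->
  exists beta : K, lt beta delta /\
    forall sigma : U, Ia i delta sigma -> ltU nu sigma ->
      exists sigma' : U, [/\ I0a lt e beta sigma', ltU sigma' sigma & ltU nu sigma'].
Proof.
  intros i delta hd nu hnu hnot.
  destruct hK as [[hirr [htr [htot hw]]] _].
  destruct (inv_all hw hC i) as [A [B C]].
  destruct (C nu hnu) as [eta [[feta [ra rb]] hr]].
  destruct (zero_exists hw delta) as [z hz].
  assert (hex : exists n, ~ lt (eta n).1 delta).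
  { apply NNPP. intro H. apply hnot. apply hr. exists eta. split; [exact feta| |reflexivity].
    intro n. apply NNPP. intro q. apply H. exists n. exact q. }
  destruct (min_nat hex) as [n [hn hmin]].
  assert (hbelow : forall k, (k < n)%N -> lt (eta k).1 delta).
  { intros k hk. apply NNPP. exact (hmin k hk). }
  destruct (@bound _ lt htr htot delta z hd hz (fun k => (eta k).1) n hbelow) as [beta [hb1 [hb2 hb3]]].
  exists beta. split; [exact hb1|]. intros sigma hs hlt.
  assert (hsI := B _ _ hs). destruct (C sigma hsI) as [rho [[frho [sa sb]] hsr]].
  apply hsr in hs. destruct hs as [f [hf hfc hef]].
  apply (e_inj hC frho hf) in hef. subst f.
  assert (lt_er : ltU (e eta) (e rho)).
  { destruct (ltU_total hC (e eta) (e rho)) as [l|[q|l]]; [exact l| |].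
    - exfalso. apply (e_inj hC feta frho) in q. subst rho. exact (hn (hfc n)).
    - exfalso. assert (hne : rho <> eta) by (intro q; subst; exact (ltU_irr hC l)).
      assert (l2 : ltU (e rho) nu) by (apply (rb rho frho hne); exact l).
      assert (l3 : ltU (e rho) sigma) by exact (ltU_trans hC l2 hlt).
      destruct sa as [q|q].
      + rewrite q in l3. exact (ltU_irr hC l3).
      + exact (ltU_irr hC (ltU_trans hC l3 q)). }
  pose proof lt_er as lt_er'.
  apply (e_ord hC feta frho) in lt_er'. destruct lt_er' as [m [hagree hlex]].
  assert (hmn : (m < n)%N).
  { apply NNPP; intro h0.
    destruct (classic (n = m)) as [q|q].
    - subst m. destruct hlex as [l|[q1 _]].
      + exact (hn (htr _ _ _ l (hfc n))).
      + rewrite q1 in hn. exact (hn (hfc n)).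
    - apply h0. assert (hnm : (n < m)%N) by lia. exfalso. apply hn. rewrite (hagree n hnm). exact (hfc n). }
  assert (exists qq : rat, lexKQ lt (eta m) ((eta m).1, qq) /\ lexKQ lt ((eta m).1, qq) (rho m))
    as [qq [l1 l2]].
  { destruct hlex as [l|[q1 q2]].
    - exists ((eta m).2 + 1)%R. split.
      + right. split; [reflexivity|]. simpl. rewrite ltrDl. exact ltr01.
      + left. simpl. exact l.
    - exists (((eta m).2 + (rho m).2) / 2)%R. destruct (midf_lt q2) as [m1 m2]. split.
      + right. split; [reflexivity|]. simpl. exact m1.
      + right. split; [exact q1|]. simpl. exact m2. }
  set g := fun k => if (k < m)%N then eta k else if k == m then ((eta m).1, qq) else (z, 0%R).
  assert (fg : finsupp lt g).
  { exists (iota 0 m.+1). intros k hk. rewrite mem_iota add0n.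
    unfold g in hk. destruct (ltnP k m) as [h|h].
    - apply (@leq_trans m); [exact h|exact (leqnSn m)].
    - destruct (k == m) eqn:E.
      + move/eqP: E => E. subst k. exact (leqnn _).
      + exfalso. apply hk. simpl. exact hz. }
  assert (hgm : g m = ((eta m).1, qq)) by (unfold g; rewrite ltnn eqxx; reflexivity).
  assert (lt1 : ltU (e eta) (e g)).
  { apply (e_ord hC feta fg). exists m. split.
    - intros k hk. unfold g. rewrite hk. reflexivity.
    - rewrite hgm. exact l1. }
  assert (lt2 : ltU (e g) (e rho)).
  { apply (e_ord hC fg frho). exists m. split.
    - intros k hk. unfold g. rewrite hk. exact (hagree k hk).
    - rewrite hgm. exact l2. }
  exists (e g). split.
  - exists g. split; [exact fg| |reflexivity].
    intro k. unfold g. destruct (ltnP k m) as [h|h].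
    + apply hb3. exact (ltn_trans h hmn).
    + destruct (k == m); [apply hb3; exact hmn|exact hb2].
  - assert (hne : g <> rho) by (intro q; rewrite q in lt2; exact (ltU_irr hC lt2)).
    apply (sb g fg hne). exact lt2.
  - destruct ra as [q|q].
    + rewrite q. exact lt1.
    + exact (ltU_trans hC q lt1).
Qed.
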